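(* Let $n\ge 1$ and let ${\rm id}\in S_n$ be the identity permutation. For a pair $(P,Q)$ of standard Young tableaux of a common shape $\lambda\vdash n$, \[ \mathcal{P}({\rm id}\rightarrow P,Q)=\begin{cases}t^{n(\lambda)}\prod_{i=1}^{|\lambda|}\alpha_{P^{(i)}/P^{(i-1)}}(q,t)&\text{if }P=Q,\\ 0&\text{otherwise,}\end{cases} \] where $P^{(i)}$ is the shape of the subtableau of $P$ consisting of entries $\le i$.
   Context: All quantities are rational functions of indeterminates $q,t$. Partitions are Young diagrams in French convention (cells $(x,y)\in\mathbb{Z}_{>0}^2$ with $x\le\lambda_y$), $\lambda'$ the conjugate; for $c=(x,y)\in\lambda$, $a_\lambda(c)=\lambda_y-x$, $\ell_\lambda(c)=\lambda'_x-y$; $n(\kappa)=\sum_{c\in\kappa}\ell_\kappa(c)$, $n'(\kappa)=\sum_{c\in\kappa}a_\kappa(c)$, $n(\rho/\kappa)=n(\rho)-n(\kappa)$, $n'(\rho/\kappa)=n'(\rho)-n'(\kappa)$. $\mathcal{U}(\lambda)$, $\mathcal{D}(\lambda)$: partitions obtained by adding, resp. removing, one cell; $\mathcal{D}^*(\lambda)=\mathcal{D}(\lambda)\cup\{\lambda\}$. For $\kappa\subseteq\rho$, $\mathcal{R}_{\rho/\kappa}$ (resp. $\mathcal{C}_{\rho/\kappa}$): cells of $\kappa$ in a row (resp. column) containing a cell of $\rho/\kappa$. $[i,j]=1-q^it^j$. For $\kappa\lessdot\rho$: $\alpha_{\rho/\kappa}=\prod_{c\in\mathcal{R}_{\rho/\kappa}}\frac{[a_\kappa(c),\ell_\kappa(c)+1]}{[a_\rho(c),\ell_\rho(c)+1]}\prod_{c\in\mathcal{C}_{\rho/\kappa}}\frac{[a_\kappa(c)+1,\ell_\kappa(c)]}{[a_\rho(c)+1,\ell_\rho(c)]}$,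 $\beta_{\rho/\kappa}=1/\alpha_{\rho/\kappa}$. Local probabilities: $\mathcal{P}_\lambda(\lambda\rightarrow\nu)=t^{n(\nu/\lambda)}\alpha_{\nu/\lambda}$; for $\mu\in\mathcal{D}(\lambda)$, $\nu\in\mathcal{U}(\lambda)$, with $A=n'(\lambda/\mu)-n'(\nu/\lambda)$, $B=n(\nu/\lambda)-n(\lambda/\mu)$: $\mathcal{P}_\lambda(\mu\rightarrow\nu)=t^{B-1}\alpha_{\nu/\lambda}\beta_{\lambda/\mu}\frac{(1-q)(1-t)}{(1-q^At^B)(1-q^{A+1}t^{B-1})}$. Growths: for $\sigma\in S_n$, take the $n\times n$ grid with vertices $(i,j)$, $0\le i,j\le n$ (matrix coordinates); square $(i,j)$ has vertices NW $(i-1,j-1)$, NE $(i-1,j)$, SW $(i,j-1)$, SE $(i,j)$ and contains a 1 iff $i=\sigma(j)$. A growth associated with $\sigma$ is a labeling $\Lambda_{ij}$ by partitions with $\Lambda_{ij}\subseteq\Lambda_{i,j+1}$, $\Lambda_{ij}\subseteq\Lambda_{i+1,j}$, $|\Lambda_{ij}|$ = number of squares $(i',j')$ with $i'\le i,j'\le j$ containing a 1. $P(\Lambda)$ (resp. $Q(\Lambda)$) has entry $i$ in the cell $\Lambda_{i,n}/\Lambda_{i-1,n}$ (resp. $\Lambda_{n,i}/\Lambda_{n,i-1}$). A square is of type III if its NE and SW vertices are both $\lambda$, NW vertex $\mu\in\mathcal{D}^*(\lambda)$, SE vertex $\nu\in\mathcal{U}(\lambda)$, and then $\mathcal{P}(\square)=\mathcal{P}_\lambda(\mu\rightarrow\nu)$;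 otherwise $\mathcal{P}(\square)=1$. $\mathcal{P}(\Lambda)=\prod_\square\mathcal{P}(\square)$ and $\mathcal{P}(\sigma\rightarrow P,Q)=\sum\mathcal{P}(\Lambda)$ over growths $\Lambda$ associated with $\sigma$ with $P(\Lambda)=P$, $Q(\Lambda)=Q$. *)

(* Defs.v *)
From HB Require Import structures.
From mathcomp Require Import all_boot all_order all_algebra all_fingroup.
From mathcomp Require Import fraction.
Set Implicit Arguments. Unset Strict Implicit. Unset Printing Implicit Defensive.
Import Order.TTheory GRing.Theory Num.Theory.
Local Open Scope ring_scope.

Definition RF : fieldType := {fraction {poly {poly rat}}}.
Definition qv : RF := FracField.tofrac (('X : {poly rat})%:P).
Definition tv : RF := FracField.tofrac ('X : {poly {poly rat}}).

Definition br (i j : nat) : RF := 1 - qv ^+ i * tv ^+ j.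

(* ---------- Partitions ----------
   A partition is a seq nat of parts lambda_1 >= lambda_2 >= ... ;
   all operations below ignore trailing zero parts (so zero-padded
   sequences represent the same partition). Cells are (x,y) with
   1 <= y, 1 <= x <= lambda_y (French convention, y = row). *)
Definition is_partition (l : seq nat) : bool :=
  sorted geq l && all (fun p => 0 < p)%N l.

Definition part (l : seq nat) (y : nat) : nat := nth 0%N l y.-1.
Definition conj (l : seq nat) (x : nat) : nat := count (fun r => x <= r)%N l.

Definition cells (l : seq nat) : seq (nat * nat) :=
  flatten [seq [seq (x, y) | x <- iota 1 (part l y)] | y <- iota 1 (size l)].

Definition arm (l : seq nat) (c : nat * nat) : nat := (part l c.2 - c.1)%N.
Definition leg (l : seq nat) (c : nat * nat) : nat := (conj l c.1 - c.2)%N.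

Definition nfun (l : seq nat) : nat := \sum_(c <- cells l) leg l c.
Definition nfun' (l : seq nat) : nat := \sum_(c <- cells l) arm l c.

Definition nskew (r k : seq nat) : int := (nfun r)%:Z - (nfun k)%:Z.
Definition nskew' (r k : seq nat) : int := (nfun' r)%:Z - (nfun' k)%:Z.

Definition sameP (a b : seq nat) : bool :=
  [seq x <- a | (0 < x)%N] == [seq x <- b | (0 < x)%N].
Definition subP (k r : seq nat) : bool :=
  all (fun y => nth 0%N k y <= nth 0%N r y)%N (iota 0 (maxn (size k) (size r))).
Definition covers (k r : seq nat) : bool := subP k r && (sumn r == (sumn k).+1).

Definition Rcells (k r : seq nat) : seq (nat * nat) :=
  [seq c <- cells k | (part k c.2 < part r c.2)%N].
Definition Ccells (k r : seq nat) : seq (nat * nat) :=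
  [seq c <- cells k | (conj k c.1 < conj r c.1)%N].

Definition alpha (r k : seq nat) : RF :=
  (\prod_(c <- Rcells k r) (br (arm k c) (leg k c).+1 / br (arm r c) (leg r c).+1)) *
  (\prod_(c <- Ccells k r) (br (arm k c).+1 (leg k c) / br (arm r c).+1 (leg r c))).
Definition beta (r k : seq nat) : RF := (alpha r k)^-1.

Definition locP (la mu nu : seq nat) : RF :=
  if sameP mu la then tv ^ nskew nu la * alpha nu la
  else
    let A := nskew' la mu - nskew' nu la in
    let B := nskew nu la - nskew la mu in
    tv ^ (B - 1) * alpha nu la * beta la mu *
      ((1 - qv) * (1 - tv) /
       ((1 - qv ^ A * tv ^ B) * (1 - qv ^ (A + 1) * tv ^ (B - 1)))).

(* ---------- Growths ----------
   A labeling of the grid vertices (i,j), 0 <= i,j <= n, by partitions of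
   size <= n, each encoded as a zero-padded n-tuple of parts (a unique
   encoding for weakly decreasing tuples). *)
Definition labeling (n : nat) := {ffun 'I_n.+1 * 'I_n.+1 -> n.-tuple 'I_n.+1}.

Definition lab n (L : labeling n) (i j : nat) : seq nat :=
  map val (tval (L (inord i, inord j))).

(* sigma in S_n acting on {1..n} via 'I_n (value k stands for k+1):
   square (i,j) contains a 1 iff i = sigma(j). *)
Definition is_growth n (s : 'S_n) (L : labeling n) : bool :=
  [forall i : 'I_n.+1, forall j : 'I_n.+1,
    [&& sorted geq (lab L i j),
        (j < n)%N ==> subP (lab L i j) (lab L i j.+1),
        (i < n)%N ==> subP (lab L i j) (lab L i.+1 j) &
        sumn (lab L i j) == #|[set j' : 'I_n | (j' < j)%N && (s j' < i)%N]| ]].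

(* The tableau with entry i in the cell c i / c (i-1), 1 <= i <= n,
   given as the list of its rows (row 1 first), each row increasing. *)
Definition tab_of_chain (c : nat -> seq nat) (n : nat) : seq (seq nat) :=
  [seq r <- [seq [seq i <- iota 1 n | (nth 0 (c i.-1) y < nth 0 (c i) y)%N]
            | y <- iota 0 n] | r != [::]].

Definition tabP n (L : labeling n) := tab_of_chain (fun i => lab L i n) n.
Definition tabQ n (L : labeling n) := tab_of_chain (fun i => lab L n i) n.

Definition sq_weight n (L : labeling n) (i j : nat) : RF :=
  let NW := lab L i.-1 j.-1 in let NE := lab L i.-1 j in
  let SW := lab L i j.-1 in let SE := lab L i j in
  if [&& sameP NE SW, sameP NW NE || covers NW NE & covers NE SE]
  then locP NE NW SE else 1.

Definition growth_weight n (L : labeling n) : RF :=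
  \prod_(i < n) \prod_(j < n) sq_weight L i.+1 j.+1.

Definition Pprob n (s : 'S_n) (P Q : seq (seq nat)) : RF :=
  \sum_(L : labeling n | [&& is_growth s L, tabP L == P & tabQ L == Q])
     growth_weight L.

(* ---------- Standard Young tableaux ----------
   A tableau is the list of its rows (row 1 = bottom row, French). *)

Definition is_SYT (n : nat) (T : seq (seq nat)) : bool :=
  [&& is_partition (shape T),
      perm_eq (flatten T) (iota 1 n),
      all (sorted ltn) T &
      all (fun y => all (fun x => nth 0 (nth [::] T y) x < nth 0 (nth [::] T y.+1) x)%N
                        (iota 0 (size (nth [::] T y.+1))))
          (iota 0 (size T))].

(* P^(i): shape of the subtableau of entries <= i (possibly with trailing
   zero parts, which are ignored by all partition operations) *)
Definition subshape (T : seq (seq nat)) (i : nat) : seq nat :=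
  [seq count (fun e => e <= i)%N r | r <- T].

(* Main.v *)
Require Import Defs.
From HB Require Import structures.
From mathcomp Require Import all_boot all_order all_algebra all_fingroup.
From mathcomp Require Import fraction.
From mathcomp Require Import zify.
Import Order.TTheory GRing.Theory Num.Theory.
Set Implicit Arguments. Unset Strict Implicit. Unset Printing Implicit Defensive.

Definition nxt (a b : seq nat) := forall y, nth 0 a y = nth 0 b y.

Lemma nth_pad (l : seq nat) k y : nth 0 (l ++ nseq k 0) y = nth 0 l y.
Proof.
rewrite nth_cat; case: ltnP => // h; rewrite nth_nseq nth_default //.
by case: ifP.
Qed.

Lemma nxt_pad a b : nxt a b ->
  a ++ nseq (size b - size a) 0 = b ++ nseq (size a - size b) 0.
Proof.
move=> h; apply: (@eq_from_nth _ 0).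
  by rewrite !size_cat !size_nseq; lia.
by move=> y _; rewrite !nth_pad.
Qed.

Lemma flatten_nil (T S : Type) (s : seq S) :
  flatten [seq ([::] : seq T) | _ <- s] = [::].
Proof. by elim: s. Qed.

Lemma cells_pad l k : cells (l ++ nseq k 0) = cells l.
Proof.
rewrite /cells size_cat iotaD map_cat flatten_cat -[RHS]cats0; congr (_ ++ _).
  by congr flatten; apply/eq_map => y; rewrite /part nth_pad.
rewrite size_nseq.
have hL : forall y, size l < y -> part (l ++ nseq k 0) y = 0.
  by move=> y hy; rewrite /part nth_pad nth_default //; lia.
move: (l ++ nseq k 0) hL => L hL.
have : size l < 1 + size l by [].
move: (1 + size l) => m0 hm0.
elim: k m0 hm0 => //= k IH m hm.
rewrite IH; last by lia.
by rewrite hL.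
Qed.

Lemma conj_pad l k x : 0 < x -> conj (l ++ nseq k 0) x = conj l x.
Proof.
move=> hx; rewrite /conj count_cat; suff -> : count (fun r => x <= r) (nseq k 0) = 0 by rewrite addn0.
by elim: k => //= k ->; rewrite leqn0; case: x hx.
Qed.

Lemma cells_nxt a b : nxt a b -> cells a = cells b.
Proof. by move=> h; rewrite -(cells_pad a (size b - size a)) (nxt_pad h) cells_pad. Qed.

Lemma conj_nxt a b x : nxt a b -> 0 < x -> conj a x = conj b x.
Proof.
move=> h hx; rewrite -(conj_pad a (size b - size a) hx) (nxt_pad h) conj_pad //.
Qed.

Lemma part_nxt a b y : nxt a b -> part a y = part b y.
Proof. by move=> h; rewrite /part h. Qed.

Lemma cells_pos l c : c \in cells l -> 0 < c.1.
Proof.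
case/flatten_mapP => y _ /mapP [x]; rewrite mem_iota => /andP[h _] -> //.
Qed.

Lemma arm_nxt a b c : nxt a b -> arm a c = arm b c.
Proof. by move=> h; rewrite /arm (part_nxt _ h). Qed.

Lemma leg_nxt a b c : nxt a b -> 0 < c.1 -> leg a c = leg b c.
Proof. by move=> h h1; rewrite /leg (conj_nxt h h1). Qed.

Lemma nfun_nxt a b : nxt a b -> nfun a = nfun b.
Proof.
move=> h; rewrite /nfun -(cells_nxt h); apply: eq_big_seq => c hc.
by rewrite (leg_nxt h (cells_pos hc)).
Qed.

Lemma alpha_nxt r k r' k' : nxt r r' -> nxt k k' -> alpha r k = alpha r' k'.
Proof.
move=> hr hk; rewrite /alpha /Rcells /Ccells -(cells_nxt hk).
have e1 : forall c, c \in cells k -> (part k c.2 < part r c.2) = (part k' c.2 < part r' c.2).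
  by move=> c _; rewrite (part_nxt _ hr) (part_nxt _ hk).
have e2 : forall c, c \in cells k -> (conj k c.1 < conj r c.1) = (conj k' c.1 < conj r' c.1).
  by move=> c /cells_pos h; rewrite (conj_nxt hr h) (conj_nxt hk h).
rewrite (eq_in_filter e1) (eq_in_filter e2).
congr (_ * _)%R; apply: eq_big_seq => c; rewrite mem_filter => /andP[_ /cells_pos h];
  by rewrite (arm_nxt _ hr) (arm_nxt _ hk) (leg_nxt hr h) (leg_nxt hk h).
Qed.


Definition ple (a b : seq nat) := forall y, nth 0 a y <= nth 0 b y.

Lemma subP_ple a b : subP a b = true <-> ple a b.
Proof.
rewrite /subP; split.
  move/allP=> h y; case: (ltnP y (maxn (size a) (size b))) => hy.
    by apply: h; rewrite mem_iota.
  by rewrite !nth_default //; lia.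
move=> h; apply/allP => y _; exact: h.
Qed.

Lemma nth_le_sumn s y : nth 0 s y <= sumn s.
Proof. elim: s y => [|x s IH] [|y] //=; [lia| have := IH y; lia]. Qed.

Lemma ple_tl x a b : ple (x :: a) b -> ple a (behead b).
Proof. move=> h y; have := h y.+1; case: b {h} => //=; by rewrite nth_nil. Qed.

Lemma sumn_le a b : ple a b -> sumn a <= sumn b.
Proof.
elim: a b => [|x a IH] [|z b] //= h.
- have := h 0%N; have := IH [::] (ple_tl h) => /=; lia.
- have := h 0%N; have := IH b (ple_tl h) => /=; lia.
Qed.

Lemma diff_le a b : ple a b -> forall y, nth 0 b y - nth 0 a y + sumn a <= sumn b.
Proof.
elim: b a => [|z b IH] [|x a] h y.
- by rewrite nth_nil.
- have := sumn_le h; rewrite nth_nil /=; lia.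
- have := nth_le_sumn (z :: b) y; rewrite nth_nil /=; lia.
- have h0 := h 0%N; have hs := sumn_le (ple_tl h); have := IH a (ple_tl h).
  case: y => [|y] /= => [_|/(_ y)]; simpl in h0, hs; lia.
Qed.


Lemma ple_sumn_eq a b : ple a b -> sumn b = sumn a -> forall y, nth 0 a y = nth 0 b y.
Proof. move=> h e y; have := diff_le h y; have := h y; lia. Qed.

Lemma ple_sumn_S a b : ple a b -> sumn b = (sumn a).+1 -> forall y, nth 0 b y <= (nth 0 a y).+1.
Proof. move=> h e y; have := diff_le h y; have := h y; lia. Qed.

Lemma eq_of_nth (a b : seq nat) : size a = size b -> (forall y, nth 0 a y = nth 0 b y) -> a = b.
Proof. move=> hs h; apply: (eq_from_nth hs) => y _; exact: h. Qed.

Lemma sumn_filter_pos s : sumn [seq x <- s | 0 < x] = sumn s.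
Proof. by elim: s => //= x s IH; case: x => //= x; rewrite IH. Qed.

Lemma sameP_sumn a b : Defs.sameP a b -> sumn a = sumn b.
Proof. by move/eqP=> h; rewrite -sumn_filter_pos h sumn_filter_pos. Qed.


Lemma card_pv n (p : pred nat) : #|[set x : 'I_n | p x]| = count p (iota 0 n).
Proof.
rewrite cardsE cardE -(size_map val) /enum_mem -val_enum_ord.
rewrite size_map size_filter count_map -enumT. by apply: eq_count.
Qed.

Lemma count_lt m n : count (fun x => x < m) (iota 0 n) = minn m n.
Proof.
elim: n => // n IH; rewrite -addn1 iotaD count_cat IH /=; lia.
Qed.

Lemma growth_facts n (L : labeling n) i j : is_growth 1%g L -> i <= n -> j <= n ->
  [/\ sorted geq (lab L i j), j < n -> ple (lab L i j) (lab L i j.+1),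
      i < n -> ple (lab L i j) (lab L i.+1 j) & sumn (lab L i j) = minn i j].
Proof.
move=> hg hi hj; move: hg => /forallP/(_ (inord i))/forallP/(_ (inord j)).
rewrite !inordK ?ltnS //; case/and4P => h1 h2 h3 /eqP h4; split => //.
- by move=> hj'; apply/subP_ple; exact: (implyP h2).
- by move=> hi'; apply/subP_ple; exact: (implyP h3).
rewrite h4.
have -> : [set j' : 'I_n | (j' < j) && ((1%g : 'S_n) j' < i)] = [set j' : 'I_n | j' < minn i j].
  by apply/setP => x; rewrite !inE perm1 ltn_min andbC.
rewrite (card_pv n (fun x => x < minn i j)) count_lt; lia.
Qed.

Lemma size_lab n (L : labeling n) i j : size (lab L i j) = n.
Proof. by rewrite /lab size_map size_tuple. Qed.

Lemma lab_row n (L : labeling n) i d : is_growth 1%g L -> i + d <= n -> lab L i (i + d) = lab L i i.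
Proof.
move=> hg; elim: d => [|d IH] hd; first by rewrite addn0.
rewrite -IH; last by lia.
have hi : i <= n by lia. have hd' : i + d <= n by lia.
have [_ h2 _ h4] := growth_facts hg hi hd'.
have [_ _ _ h4'] := growth_facts hg hi hd.
rewrite addnS in h4' hd *.
apply/esym/eq_of_nth; first by rewrite !size_lab.
apply: ple_sumn_eq; first by apply: h2; lia.
rewrite h4 h4'; lia.
Qed.

Lemma lab_col n (L : labeling n) j d : is_growth 1%g L -> j + d <= n -> lab L (j + d) j = lab L j j.
Proof.
move=> hg; elim: d => [|d IH] hd; first by rewrite addn0.
rewrite -IH; last by lia.
have hj : j <= n by lia. have hd' : j + d <= n by lia.
have [_ _ h3 h4] := growth_facts hg hd' hj.
have [_ _ _ h4'] := growth_facts hg hd hj.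
rewrite addnS in h4' hd *.
apply/esym/eq_of_nth; first by rewrite !size_lab.
apply: ple_sumn_eq; first by apply: h3; lia.
rewrite h4 h4'; lia.
Qed.

Lemma lab_min n (L : labeling n) i j : is_growth 1%g L -> i <= n -> j <= n ->
  lab L i j = lab L (minn i j) (minn i j).
Proof.
move=> hg hi hj; case: (leqP i j) => h.
  have -> : j = i + (j - i) by lia.
  apply: lab_row => //; lia.
have -> : i = j + (i - j) by lia.
apply: lab_col => //; lia.
Qed.


Lemma tab_ext (c c' : nat -> seq nat) n : (forall i, i <= n -> c i = c' i) ->
  tab_of_chain c n = tab_of_chain c' n.
Proof.
move=> h; rewrite /tab_of_chain; congr filter; apply/eq_map => y.
apply/eq_in_filter => i; rewrite mem_iota => /andP[h1 h2].
rewrite !h //; lia.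
Qed.

Definition Dg n (L : labeling n) i := lab L i i.

Lemma tabP_D n (L : labeling n) : is_growth 1%g L -> tabP L = tab_of_chain (Dg L) n.
Proof. move=> hg; apply: tab_ext => i hi; rewrite /Dg (lab_min hg) //; congr lab; lia. Qed.

Lemma tabQ_D n (L : labeling n) : is_growth 1%g L -> tabQ L = tab_of_chain (Dg L) n.
Proof. move=> hg; apply: tab_ext => i hi; rewrite /Dg (lab_min hg) //; congr lab; lia. Qed.

Lemma tv_neq0 : tv != 0%R.
Proof. by rewrite /tv tofrac_eq0 polyX_eq0. Qed.

Lemma sq_off n (L : labeling n) i j : is_growth 1%g L -> i < n -> j < n -> i != j ->
  sq_weight L i.+1 j.+1 = 1%R.
Proof.
move=> hg hi hj hij; rewrite /sq_weight /=.
have [_ _ _ e1] := growth_facts hg (ltnW hi) hj.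
have [_ _ _ e2] := growth_facts hg hi (ltnW hj).
case: ifP => // /andP[/sameP_sumn]; rewrite e1 e2 => h _; exfalso; move: h hij; lia.
Qed.

Lemma sameP_refl a : Defs.sameP a a.
Proof. exact: eqxx. Qed.

Lemma sq_diag n (L : labeling n) i : is_growth 1%g L -> i < n ->
  sq_weight L i.+1 i.+1 = (tv ^ nskew (Dg L i.+1) (Dg L i) * alpha (Dg L i.+1) (Dg L i))%R.
Proof.
move=> hg hi; rewrite /sq_weight /=.
have e1 : lab L i i.+1 = Dg L i.
  by rewrite (lab_min hg) ?(ltnW hi) //; congr lab; lia.
have e2 : lab L i.+1 i = Dg L i.
  by rewrite (lab_min hg) ?(ltnW hi) //; congr lab; lia.
have [_ _ h3 _] := growth_facts hg (ltnW hi) hi.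
have [_ _ _ s1] := growth_facts hg hi hi.
have [_ _ _ s0] := growth_facts hg (ltnW hi) (ltnW hi).
rewrite e1 e2 sameP_refl /=.
have -> : covers (Dg L i) (Dg L i.+1).
  rewrite /covers; apply/andP; split.
    by apply/subP_ple; rewrite -e1; exact: h3.
  by rewrite /Dg s1 s0 minnn minnn.
by rewrite /locP /Dg sameP_refl.
Qed.


Lemma tele_pow (f : nat -> nat) m :
  (\prod_(i < m) tv ^ ((f i.+1)%:Z - (f i)%:Z) = tv ^ ((f m)%:Z - (f 0%N)%:Z))%R.
Proof.
elim: m => [|m IH]; first by rewrite big_ord0 subrr expr0z.
rewrite big_ord_recr /= IH -expfzDr ?tv_neq0 //; congr (_ ^ _)%R.
by rewrite addrC addrA subrK.
Qed.

Lemma weight_formula n (L : labeling n) : is_growth 1%g L ->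
  growth_weight L = (tv ^ ((nfun (Dg L n))%:Z - (nfun (Dg L 0))%:Z) *
     \prod_(i < n) alpha (Dg L i.+1) (Dg L i))%R.
Proof.
move=> hg; rewrite /growth_weight.
rewrite (eq_bigr (fun i : 'I_n => tv ^ nskew (Dg L i.+1) (Dg L i) * alpha (Dg L i.+1) (Dg L i)))%R.
  by rewrite big_split /= (tele_pow (fun i => nfun (Dg L i))).
move=> i _; rewrite (bigD1 i) //= big1 ?mulr1; first exact: sq_diag.
by move=> j hj; apply: sq_off; rewrite // eq_sym.
Qed.


Definition crow (D : nat -> seq nat) n y :=
  [seq i <- iota 1 n | nth 0 (D i.-1) y < nth 0 (D i) y].

Definition cP (T : seq (seq nat)) m y := count (fun e => e <= m) (nth [::] T y).

Lemma count_iota_cut (p : pred nat) k n : k <= n ->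
  count (predI (fun e => e <= k) p) (iota 1 n) = count p (iota 1 k).
Proof.
move=> hk; have -> : n = k + (n - k) by lia.
rewrite iotaD count_cat.
have -> : count (predI (fun e => e <= k) p) (iota (1 + k) (n - k)) = 0.
  rewrite (eq_in_count (a2 := pred0)) ?count_pred0 // => x; rewrite mem_iota /= => /andP[h _].
  by rewrite ltn_geF.
rewrite addn0; apply: eq_in_count => x; rewrite mem_iota /= => /andP[_ h].
by rewrite (_ : x <= k) //; lia.
Qed.


Lemma chain_cnt (D : nat -> seq nat) n y k :
  sumn (D 0) = 0 ->
  (forall i, i < n -> ple (D i) (D i.+1) /\ sumn (D i.+1) = (sumn (D i)).+1) ->
  k <= n -> count (fun e => e <= k) (crow D n y) = nth 0 (D k) y.
Proof.
move=> h0 hs hk; rewrite /crow count_filter count_iota_cut //.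
elim: k hk => [|k IH] hk.
  by have := nth_le_sumn (D 0) y; rewrite h0 /=; lia.
rewrite -{1}[k.+1]addn1 iotaD count_cat IH; last by lia.
have [hp hS] := hs k hk.
have := hp y; have := ple_sumn_S hp hS y => /=; rewrite add0n add1n; simpl; lia.
Qed.

Lemma geq_trans : transitive geq.
Proof. by move=> a b c h1 h2; apply: leq_trans h2 h1. Qed.

Lemma chain_inv (D : nat -> seq nat) n i :
  (forall i, i <= n -> size (D i) = n) -> sumn (D 0) = 0 ->
  (forall i, i < n -> ple (D i) (D i.+1) /\ sumn (D i.+1) = (sumn (D i)).+1) ->
  sorted geq (D n) -> i <= n ->
  D i = mkseq (cP (tab_of_chain D n) i) n.
Proof.
move=> hsz h0 hs hsort hi.
have size_row : forall y, size (crow D n y) = nth 0 (D n) y.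
  move=> y; rewrite -(chain_cnt y h0 hs (leqnn n)) -[LHS]count_predT.
  apply: eq_in_count => x; rewrite /crow mem_filter mem_iota => /andP[_ /andP[_ h]] /=; lia.
set k0 := find (fun x => x == 0) (D n).
have hk0 : k0 <= n by rewrite -(hsz n (leqnn n)) find_size.
have pos_iff : forall y, (0 < nth 0 (D n) y) = (y < k0).
  move=> y; case: (ltnP y k0) => hy.
    by have := before_find 0 hy; rewrite lt0n => ->.
  case: (ltnP y n) => hyn; last by rewrite nth_default // hsz.
  have hk : k0 < size (D n) by rewrite hsz //; lia.
  have := nth_find 0 (_ : has (fun x => x == 0) (D n)); rewrite has_find => /(_ hk) /eqP e.
  have hy' : y \in [pred m | m < size (D n)] by rewrite inE hsz.
  have := @sorted_leq_nth _ _ geq_trans leqnn 0 _ hsort k0 y hk hy' hy.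
  by rewrite /= e leqn0 => /eqP ->.
have eT : tab_of_chain D n = [seq crow D n y | y <- iota 0 k0].
  rewrite /tab_of_chain -/(crow D n) filter_map.
  have -> : [seq y <- iota 0 n | preim (crow D n) (fun r => r != [::]) y] = iota 0 k0.
    rewrite (eq_filter (a2 := fun y => y < k0)); last first.
      by move=> y /=; rewrite -pos_iff -size_row; case: (crow D n y).
    have -> : n = k0 + (n - k0) by lia.
    rewrite iotaD filter_cat add0n.
    rewrite (eq_in_filter (a2 := predT)); last by move=> x; rewrite mem_iota.
    rewrite (eq_in_filter (a1 := fun y => y < k0) (a2 := pred0)); last first.
      by move=> x; rewrite mem_iota => /andP[h _] /=; rewrite ltnNge h.
    by rewrite filter_predT filter_pred0 cats0.
  by [].
have nthT : forall y, y < n -> nth [::] (tab_of_chain D n) y = crow D n y.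
  move=> y hy; rewrite eT; case: (ltnP y k0) => hyk.
    by rewrite (nth_map 0) ?size_iota // nth_iota.
  rewrite nth_default ?size_map ?size_iota //.
  by apply/esym/eqP; rewrite -size_eq0 size_row eqn0Ngt pos_iff -leqNgt.
apply: eq_of_nth; first by rewrite size_mkseq hsz.
move=> y; case: (ltnP y n) => hy.
  by rewrite nth_mkseq // /cP nthT // chain_cnt.
by rewrite !nth_default ?size_mkseq ?hsz.
Qed.



Lemma count_le_in (T : eqType) (p q : pred T) (s : seq T) :
  (forall x, x \in s -> p x -> q x) -> count p s <= count q s.
Proof.
elim: s => //= x s IH h.
have : count p s <= count q s by apply: IH => y hy; apply: h; rewrite inE hy orbT.
case hp: (p x); last lia.
by rewrite h ?mem_head //; lia.
Qed.

Lemma count_nth_iota (p : pred nat) (s : seq nat) :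
  count p s = count (fun x => p (nth 0 s x)) (iota 0 (size s)).
Proof. by rewrite -{1}(mkseq_nth 0 s) /mkseq count_map. Qed.

Lemma count_le_iota1 m n : count (fun e => e <= m) (iota 1 n) = minn m n.
Proof.
elim: n => // n IH; rewrite -{1}[n.+1]addn1 iotaD count_cat IH /=; lia.
Qed.


Lemma syt_elem n P y x : is_SYT n P -> x \in nth [::] P y -> 0 < x <= n.
Proof.
case/and4P => _ hperm _ _ hx.
have : x \in flatten P.
  case: (ltnP y (size P)) => hy; last by rewrite nth_default in hx.
  by apply/flattenP; exists (nth [::] P y) => //; rewrite mem_nth.
by rewrite (perm_mem hperm) mem_iota; lia.
Qed.

Lemma syt_size n P : is_SYT n P -> size P <= n.
Proof.
case/and4P => /andP[_ hpos] hperm _ _.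
have := perm_size hperm; rewrite size_iota size_flatten => <-.
elim: P hpos {hperm} => //= r P IH /andP[h1 h2]; have := IH h2; lia.
Qed.

Lemma syt_sumn n P m : is_SYT n P -> m <= n -> sumn (subshape P m) = m.
Proof.
case/and4P => _ hperm _ _ hm.
rewrite /subshape -count_flatten (seq.permP hperm) count_le_iota1; lia.
Qed.

Lemma nth_subshape P m y : nth 0 (subshape P m) y = cP P m y.
Proof.
rewrite /subshape /cP; case: (ltnP y (size P)) => hy.
  by rewrite (nth_map [::]).
by rewrite nth_default ?size_map // nth_default.
Qed.

Lemma nth_shape (P : seq (seq nat)) y : nth 0 (shape P) y = size (nth [::] P y).
Proof.
rewrite /shape; case: (ltnP y (size P)) => hy.
  by rewrite (nth_map [::]).
by rewrite nth_default ?size_map // nth_default.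
Qed.

Lemma cP_le_n n P m y : is_SYT n P -> m <= n -> cP P m y <= n.
Proof.
move=> hP hm; rewrite -nth_subshape; have := nth_le_sumn (subshape P m) y.
rewrite (syt_sumn hP hm); lia.
Qed.

Lemma cP_mono P m m' y : m <= m' -> cP P m y <= cP P m' y.
Proof. move=> h; apply: sub_count => x /= hx; lia. Qed.

Lemma cP_sorted n P m y : is_SYT n P -> cP P m y.+1 <= cP P m y.
Proof.
move=> hP; move: (hP) => /and4P[/andP[hsh _] _ _ hcol].
case: (ltnP y.+1 (size P)) => hy; last by rewrite /cP (nth_default _ hy).
set r := nth [::] P y; set r' := nth [::] P y.+1.
have hsz : size r' <= size r.
  move/sortedP: hsh => /(_ 0 y); rewrite size_map !nth_shape => /(_ hy) //.
have hc : forall x, x < size r' -> nth 0 r x < nth 0 r' x.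
  move=> x hx; move/allP: hcol => /(_ y); rewrite mem_iota add0n => /(_ (ltnW hy)).
  by move/allP => /(_ x); rewrite mem_iota add0n; apply.
rewrite /cP -/r -/r' !(count_nth_iota (fun e => e <= m)).
apply: (@leq_trans (count (fun x => nth 0 r x <= m) (iota 0 (size r')))).
  apply: count_le_in => x; rewrite mem_iota add0n => /andP[_ hx] /= h.
  by have := hc x hx; lia.
have -> : size r = size r' + (size r - size r') by lia.
by rewrite iotaD count_cat leq_addr.
Qed.

Lemma cP_step (P : seq (seq nat)) i y : 0 < i ->
  (cP P i.-1 y < cP P i y) = (i \in nth [::] P y).
Proof.
move=> hi; rewrite /cP -has_pred1 has_count.
have := count_predUI (fun e => e <= i.-1) (pred1 i) (nth [::] P y).
rewrite (eq_count (a1 := predI _ _) (a2 := pred0)); last by move=> x /=; apply/negbTE; lia.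
rewrite (eq_count (a1 := predU _ _) (a2 := fun e => e <= i)); last by move=> x /=; lia.
rewrite count_pred0 addn0 => ->; by rewrite -{1}[count _ _]addn0 ltn_add2l.
Qed.

Lemma tab_E n P : is_SYT n P -> tab_of_chain (fun i => mkseq (cP P i) n) n = P.
Proof.
move=> hP; move: (hP) => /and4P[/andP[_ hpos] _ hrows _].
rewrite /tab_of_chain.
have -> : [seq [seq i <- iota 1 n | nth 0 (mkseq (cP P i.-1) n) y < nth 0 (mkseq (cP P i) n) y] | y <- iota 0 n] = map (nth [::] P) (iota 0 n).
  apply/eq_in_map => y; rewrite mem_iota add0n => /andP[_ hy].
  rewrite (eq_in_filter (a2 := fun i => i \in nth [::] P y)); last first.
    by move=> i; rewrite mem_iota => /andP[h _]; rewrite !nth_mkseq // ?cP_step //; lia.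
  apply: (irr_sorted_eq ltn_trans ltnn).
  - exact: (sorted_filter ltn_trans _ (iota_ltn_sorted 1 n)).
  - case: (ltnP y (size P)) => hyP; last by rewrite nth_default.
    by move/allP: hrows; apply; rewrite mem_nth.
  - move=> x; rewrite mem_filter; case hx: (x \in nth [::] P y) => //=.
    by rewrite mem_iota; have := syt_elem hP hx; lia.
have hs := syt_size hP.
have -> : n = size P + (n - size P) by lia.
rewrite iotaD map_cat filter_cat -/(mkseq (nth [::] P) (size P)) mkseq_nth.
have -> : [seq r <- map (nth [::] P) (iota (0 + size P) (n - size P)) | r != [::]] = [::].
  rewrite (eq_in_filter (a2 := pred0)) ?filter_pred0 // => r /mapP [x].
  by rewrite mem_iota => /andP[h _] ->; rewrite nth_default.
rewrite cats0; apply/all_filterP.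

by apply/allP => r hr; move/allP: hpos => /(_ (size r) (map_f size hr)); case: r {hr}.
Qed.

Lemma E_top n P : is_SYT n P -> nxt (mkseq (cP P n) n) (shape P).
Proof.
move=> hP y; rewrite nth_shape; case: (ltnP y n) => hy.
  rewrite nth_mkseq // /cP -[RHS]count_predT; apply: eq_in_count => x hx.
  by have := syt_elem hP hx; rewrite /=; lia.
have hs := syt_size hP.
by rewrite nth_default ?size_mkseq // nth_default //; lia.
Qed.

Lemma E_bot n P : is_SYT n P -> nxt (mkseq (cP P 0) n) [::].
Proof.
move=> hP y; rewrite nth_nil; case: (ltnP y n) => hy.
  rewrite nth_mkseq // /cP (eq_in_count (a2 := pred0)) ?count_pred0 // => x hx.
  by have := syt_elem hP hx; rewrite /=; lia.
by rewrite nth_default ?size_mkseq.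
Qed.

Lemma E_sub n P m : is_SYT n P -> nxt (mkseq (cP P m) n) (subshape P m).
Proof.
move=> hP y; rewrite nth_subshape; case: (ltnP y n) => hy.
  by rewrite nth_mkseq.
have hs := syt_size hP.
by rewrite nth_default ?size_mkseq // /cP nth_default //; lia.
Qed.


Definition Ev n P m := mkseq (cP P m) n.
Definition L0 n P : labeling n :=
  [ffun ij : 'I_n.+1 * 'I_n.+1 => [tuple (inord (nth 0 (Ev n P (minn ij.1 ij.2)) y) : 'I_n.+1) | y < n]].

Lemma lab_L0 n P i j : is_SYT n P -> i <= n -> j <= n -> lab (L0 n P) i j = Ev n P (minn i j).
Proof.
move=> hP hi hj; rewrite /lab ffunE /= !inordK ?ltnS //.
set E := Ev n P (minn i j).
have hE : size E = n by rewrite size_mkseq.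
transitivity [seq nat_of_ord (inord (nth 0 E k) : 'I_n.+1) | k <- map val (enum 'I_n)].
  by elim: (enum 'I_n) => //= ? ? ->.
rewrite val_enum_ord.
rewrite -{2}(mkseq_nth 0 E) hE; apply/eq_in_map => k; rewrite mem_iota => /andP[_ hk] /=.
rewrite inordK // ltnS /E /Ev nth_mkseq //; apply: (cP_le_n _ hP); lia.
Qed.

Lemma sumn_nxt a b : nxt a b -> sumn a = sumn b.
Proof.
move=> h; have := congr1 sumn (nxt_pad h); rewrite !sumn_cat.
have z : forall k, sumn (nseq k 0) = 0 by elim=> //= k ->.
by rewrite !z !addn0.
Qed.

Lemma Ev_ple n P m m' : m <= m' -> ple (Ev n P m) (Ev n P m').
Proof.
move=> h y; case: (ltnP y n) => hy.
  by rewrite !nth_mkseq // cP_mono.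
by rewrite !nth_default ?size_mkseq.
Qed.

Lemma card_min n i j : j <= n ->
  #|[set j' : 'I_n | (j' < j) && ((1%g : 'S_n) j' < i)]| = minn i j.
Proof.
move=> hj.
have -> : [set j' : 'I_n | (j' < j) && ((1%g : 'S_n) j' < i)] = [set j' : 'I_n | j' < minn i j].
  by apply/setP => x; rewrite !inE perm1 ltn_min andbC.
rewrite (card_pv n (fun x => x < minn i j)) count_lt; lia.
Qed.

Lemma L0_growth n P : is_SYT n P -> is_growth 1%g (L0 n P).
Proof.
move=> hP; apply/forallP => i; apply/forallP => j.
have hi : (i : nat) <= n by rewrite -ltnS.
have hj : (j : nat) <= n by rewrite -ltnS.
rewrite (lab_L0 hP hi hj); apply/and4P; split.
- apply/(sortedP 0) => y; rewrite size_mkseq => hy.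
  rewrite !nth_mkseq //; [exact: cP_sorted hP | lia].
- apply/implyP => hj'; rewrite (lab_L0 hP hi hj'); apply/subP_ple/Ev_ple; lia.
- apply/implyP => hi'; rewrite (lab_L0 hP hi' hj); apply/subP_ple/Ev_ple; lia.
- rewrite card_min // (sumn_nxt (E_sub _ hP)) (syt_sumn hP) //; lia.
Qed.


Lemma growth_D n (L : labeling n) i : is_growth 1%g L -> i <= n -> Dg L i = Ev n (tabP L) i.
Proof.
move=> hg hi; rewrite (tabP_D hg); apply: chain_inv => //.
- by move=> k _; rewrite /Dg size_lab.
- by have [_ _ _ ->] := growth_facts hg (leq0n n) (leq0n n).
- move=> k hk.
  have e1 : lab L k k.+1 = Dg L k.
    by rewrite (lab_min hg) ?(ltnW hk) //; congr lab; lia.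
  have [_ _ h3 _] := growth_facts hg (ltnW hk) hk.
  have [_ _ _ s1] := growth_facts hg hk hk.
  have [_ _ _ s0] := growth_facts hg (ltnW hk) (ltnW hk).
  split; first by rewrite -e1; exact: h3.
  by rewrite /Dg s1 s0 !minnn.
- by have [] := growth_facts hg (leqnn n) (leqnn n).
Qed.

Lemma growth_uniq n (L : labeling n) P : is_SYT n P -> is_growth 1%g L -> tabP L = P -> L = L0 n P.
Proof.
move=> hP hg htab; apply/ffunP => -[i j].
have hi : (i : nat) <= n by rewrite -ltnS.
have hj : (j : nat) <= n by rewrite -ltnS.
have e : lab L i j = lab (L0 n P) i j.
  rewrite (lab_L0 hP hi hj) (lab_min hg hi hj) -/(Dg L _) growth_D // ?htab //; lia.
rewrite /lab !inord_val in e; apply: val_inj; exact: (inj_map val_inj e).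
Qed.

Lemma DgL0 n P i : is_SYT n P -> i <= n -> Dg (L0 n P) i = Ev n P i.
Proof. by move=> hP hi; rewrite /Dg lab_L0 // minnn. Qed.

Lemma tab_L0 n P : is_SYT n P -> tabP (L0 n P) = P /\ tabQ (L0 n P) = P.
Proof.
move=> hP; have hg := L0_growth hP.
rewrite (tabP_D hg) (tabQ_D hg); suff -> : tab_of_chain (Dg (L0 n P)) n = P by [].
rewrite -[RHS](tab_E hP); apply: tab_ext => i hi; exact: DgL0.
Qed.

Unset Implicit Arguments.
Local Open Scope ring_scope.
Theorem lemma4p29 (n : nat) (hn : (1 <= n)%N) (la : seq nat)
  (hla : is_partition la) (hsz : sumn la = n)
  (P Q : seq (seq nat))
  (hP : is_SYT n P) (hPsh : shape P = la)
  (hQ : is_SYT n Q) (hQsh : shape Q = la) :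
  Pprob (1%g : 'S_n) P Q =
  (if P == Q then
     tv ^+ nfun la *
     \prod_(1 <= i < (sumn la).+1) alpha (subshape P i) (subshape P i.-1)
   else 0).
Proof.
rewrite /Pprob; case: eqP => [ePQ|hne]; last first.
  apply: big_pred0 => L; apply/negbTE; apply/and3P => -[hg /eqP hp /eqP hq].
  by apply: hne; rewrite -hp -hq (tabP_D hg) (tabQ_D hg).
subst Q.
rewrite (big_pred1 (L0 n P)); last first.
  move=> L; apply/and3P/eqP => [[hg /eqP hp _]|->]; first exact: growth_uniq.
  by have [h1 h2] := tab_L0 hP; rewrite L0_growth // h1 h2.
rewrite (weight_formula (L0_growth hP)) !DgL0 //.
rewrite (nfun_nxt (E_top hP)) (nfun_nxt (E_bot hP)) hPsh.
have -> : nfun [::] = 0%N by rewrite /nfun /cells big_nil.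
rewrite subr0 hsz big_add1 /= big_mkord; congr (_ * _).
apply: eq_bigr => i _; rewrite !DgL0 //; last by apply: ltnW.
exact: alpha_nxt (E_sub _ hP) (E_sub _ hP).
Qed.
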